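(* Let $K$ be a field of characteristic $0$, and let $a(z)=\sum_{i=0}^u a_iz^i$, $b(z)=\sum_{j=0}^v b_jz^j\in K[z]$ with $a_u\ne0$, $b_v\ne0$, $w=\max\{u-2,v-1\}\ge0$, and such that if $u-1=v$ then $a_u(k+u)+b_v\ne0$ for all integers $k\ge0$. Let $L=-a(z)\frac{d}{dz}+b(z)$ and let $f_0,\ldots,f_w\in(1/z)K[[1/z]]$ be linearly independent over $K$ with $L\cdot f_j\in K[z]$ for all $0\le j\le w$. Then \[\bigcap_{j=0}^w\ker\varphi_{f_j}=L^*\cdot K[t].\]
   Context: For $f=\sum_{k\ge0}f_kz^{-k-1}$, $L\cdot f=-af'+bf$ (termwise derivative), and $\varphi_f:K[t]\to K$ is the $K$-linear map with $\varphi_f(t^k)=f_k$. $L^*$ is the adjoint of $L$, acting by $L^*\cdot P(t)=\frac{d}{dt}(a(t)P(t))+b(t)P(t)$, and $L^*\cdot K[t]=\{L^*\cdot P:P\in K[t]\}$. *)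

(* Defs.v *)
From HB Require Import structures.
From mathcomp Require Import all_boot all_order all_algebra.
Set Implicit Arguments. Unset Strict Implicit. Unset Printing Implicit Defensive.
Import Order.TTheory GRing.Theory Num.Theory.
Local Open Scope ring_scope.

Section Defs.
Variable K : fieldType.

(* A series f = \sum_{k>=0} f_k z^{-k-1} in (1/z)K[[1/z]] is represented by
   its coefficient sequence f : nat -> K. *)

Definition lcoef (f : nat -> K) (n : int) : K :=
  if (n < 0)%R then f (absz (n + 1)) else 0.

Definition dlcoef (f : nat -> K) (n : int) : K :=
  (n + 1)%:~R * lcoef f (n + 1).

Definition pmul_coef (p : {poly K}) (g : int -> K) (n : int) : K :=
  \sum_(i < size p) p`_i * g (n - i%:Z).

Definition Lcoef (a b : {poly K}) (f : nat -> K) (n : int) : K :=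
  - pmul_coef a (dlcoef f) n + pmul_coef b (lcoef f) n.

Definition L_in_poly (a b : {poly K}) (f : nat -> K) : Prop :=
  forall n : int, (n < 0)%R -> Lcoef a b f n = 0.

Definition phi (f : nat -> K) (P : {poly K}) : K :=
  \sum_(k < size P) P`_k * f k.

Definition Lstar (a b : {poly K}) (P : {poly K}) : {poly K} :=
  (a * P)^`() + b * P.

End Defs.

(* Main.v *)
Require Import Defs.
From HB Require Import structures.
From mathcomp Require Import all_boot all_order all_algebra.
From mathcomp Require Import zify.
Import Order.TTheory GRing.Theory Num.Theory.
Local Open Scope ring_scope.

Lemma phi_sum (K : fieldType) (g : nat -> K) (P : {poly K}) N :
  (size P <= N)%N -> phi g P = \sum_(k < N) P`_k * g k.
Proof.
move=> h; rewrite /phi (big_ord_widen N (fun k => P`_k * g k) h) big_mkcond /=.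
apply: eq_bigr => i _; case: ifP => // /negbT; rewrite -leqNgt => hi.
by rewrite nth_default // mul0r.
Qed.
Arguments phi_sum {K} g {P N}.

Lemma phiD (K : fieldType) (g : nat -> K) (P Q : {poly K}) :
  phi g (P + Q) = phi g P + phi g Q.
Proof.
pose N := maxn (size P) (size Q).
rewrite (phi_sum g (N := N) (size_polyD P Q)) (phi_sum g (N := N) (leq_maxl _ _))
  (phi_sum g (N := N) (leq_maxr _ _)) -big_split.
by apply: eq_bigr => i _; rewrite coefD mulrDl.
Qed.

Lemma phiZ (K : fieldType) (g : nat -> K) c (P : {poly K}) :
  phi g (c *: P) = c * phi g P.
Proof.
rewrite (phi_sum g (size_scale_leq c P)) /phi mulr_sumr.
by apply: eq_bigr => i _; rewrite coefZ mulrA.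
Qed.

Lemma phi0 (K : fieldType) (g : nat -> K) : phi g 0 = 0.
Proof. by rewrite /phi size_poly0 big_ord0. Qed.

Lemma phi_sumb (K : fieldType) (g : nat -> K) n (F : 'I_n -> {poly K}) :
  phi g (\sum_(i < n) F i) = \sum_(i < n) phi g (F i).
Proof.
elim/big_rec2: _ => [|i x y _ h]; first exact: phi0.
by rewrite phiD h.
Qed.

Lemma phiXn (K : fieldType) (g : nat -> K) l : phi g 'X^l = g l.
Proof.
rewrite /phi size_polyXn big_ord_recr /= coefXn eqxx mul1r big1 ?add0r // => i _.
by rewrite coefXn (ltn_eqF (ltn_ord i)) mul0r.
Qed.

Lemma phi_mulXn (K : fieldType) (g : nat -> K) (p : {poly K}) l :
  phi g (p * 'X^l) = \sum_(i < size p) p`_i * g (i + l)%N.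
Proof.
have H : (size (p * 'X^l)%R <= l + size p)%N.
  apply/leq_sizeP => j hj; rewrite coefMXn; case: ifP => // _.
  apply: nth_default; rewrite -(addKn l (size p)); exact: leq_sub2r.
rewrite (phi_sum _ H) big_split_ord /= big1 ?add0r.
  by apply: eq_bigr => i _; rewrite coefMXn /= ltnNge leq_addr /= addKn addnC.
by move=> i _; rewrite coefMXn /= ltn_ord mul0r.
Qed.

Lemma lcoef_negE (K : fieldType) (f : nat -> K) (n : int) k :
  n = - (k.+1)%:Z -> lcoef f n = f k.
Proof.
move=> ->; rewrite /lcoef.
have -> : (- (k.+1)%:Z < 0) = true by lia.
have -> : (- (k.+1)%:Z + 1) = - k%:Z by lia.
by rewrite abszN absz_nat.
Qed.
Arguments lcoef_negE {K} f {n} k.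

Lemma phi_deriv (K : fieldType) (f : nat -> K) (p : {poly K}) :
  phi f p^`() = phi (fun n => n%:R * lcoef f (- n%:Z)) p.
Proof.
have H : (size p^`() <= size p)%N.
  apply/leq_sizeP => j hj; rewrite coef_deriv nth_default ?mul0rn //; exact: leqW.
rewrite (phi_sum f H) (phi_sum _ (N := (size p).+1)) ?leqnSn //.
rewrite big_ord_recl /= mul0r mulr0 add0r.
apply: eq_bigr => i _; rewrite coef_deriv /bump leq0n add1n (lcoef_negE _ i) //.
by rewrite mulrA mulr_natr.
Qed.

Lemma LstarD (K : fieldType) (a b P Q : {poly K}) :
  Lstar a b (P + Q) = Lstar a b P + Lstar a b Q.
Proof. by rewrite /Lstar !mulrDr derivD addrACA. Qed.

Lemma LstarZ (K : fieldType) (a b P : {poly K}) c :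
  Lstar a b (c *: P) = c *: Lstar a b P.
Proof. by rewrite /Lstar -!scalerAr derivZ scalerDr. Qed.

Lemma Lstar0 (K : fieldType) (a b : {poly K}) : Lstar a b 0 = 0.
Proof. by rewrite /Lstar !mulr0 deriv0 addr0. Qed.

Lemma Lstar_sum (K : fieldType) (a b : {poly K}) n (F : 'I_n -> {poly K}) :
  Lstar a b (\sum_(i < n) F i) = \sum_(i < n) Lstar a b (F i).
Proof.
elim/big_rec2: _ => [|i x y _ h]; first exact: Lstar0.
by rewrite LstarD h.
Qed.

Lemma phi_Lstar_Xn (K : fieldType) (a b : {poly K}) (f : nat -> K) l :
  phi f (Lstar a b 'X^l) = Lcoef a b f (- l%:Z - 1).
Proof.
rewrite /Lstar phiD phi_deriv !phi_mulXn /Lcoef /pmul_coef.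
congr (_ + _).
  rewrite -sumrN; apply: eq_bigr => i _; rewrite -mulrN; congr (_ * _).
  rewrite /dlcoef.
  have -> : - l%:Z - 1 - i%:Z + 1 = - (i + l)%N%:Z by lia.
  by rewrite mulrNz mulNr opprK.
apply: eq_bigr => i _; congr (_ * _); rewrite (lcoef_negE _ (i + l)) //; lia.
Qed.

Lemma phi_Lstar (K : fieldType) (a b : {poly K}) (f : nat -> K) Q :
  phi f (Lstar a b Q) = \sum_(l < size Q) Q`_l * Lcoef a b f (- l%:Z - 1).
Proof.
rewrite -{1}(coefK Q) poly_def Lstar_sum phi_sumb.
by apply: eq_bigr => i _; rewrite LstarZ phiZ phi_Lstar_Xn.
Qed.

Lemma reduce (K : fieldType) (a b : {poly K}) (m : nat) :
  (forall e, (size (Lstar a b 'X^e) <= e + m + 1)%N) ->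
  (forall e, (Lstar a b 'X^e)`_(e + m) != 0) ->
  forall n (P : {poly K}), (size P <= n)%N ->
  exists Q R, P = Lstar a b Q + R /\ (size R <= m)%N.
Proof.
move=> hsz hc; elim=> [|n IH] P hP.
  by exists 0, P; rewrite Lstar0 add0r; split => //; exact: leq_trans hP (leq0n m).
case: (leqP (size P) m) => hm; first by exists 0, P; rewrite Lstar0 add0r.
pose d := (size P).-1; pose e := (d - m)%N.
have hd : (size P = d.+1)%N by rewrite /d prednK //; lia.
have hed : (e + m = d)%N by rewrite /e subnK //; lia.
pose L := Lstar a b 'X^e.
pose c := P`_d / L`_d.
have hL := hsz e; rewrite hed -/L in hL.
have hcL := hc e; rewrite hed -/L in hcL.
have hP' : (size (P - c *: L)%R <= n)%N.
  apply: leq_trans (_ : d <= n)%N; last by lia.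
  apply/leq_sizeP => j hj; rewrite coefB coefZ.
  case: (ltngtP d j) => hdj.
  - rewrite !nth_default ?mulr0 ?subr0 //; [apply: leq_trans hL _; by rewrite addn1 | by rewrite hd].
  - by move: hdj hj; lia.
  - by rewrite -hdj /c divfK // subrr.
have [Q [R [eP hR]]] := IH _ hP'.
exists (Q + c *: 'X^e), R; split => //.
by rewrite LstarD LstarZ -/L addrAC -eP subrK.
Qed.

Lemma coef_LstarXn (K : fieldType) (a b : {poly K}) e k :
  (Lstar a b 'X^e)`_k =
  (if (k.+1 < e)%N then 0 else a`_(k.+1 - e)) *+ k.+1 +
  (if (k < e)%N then 0 else b`_(k - e)).
Proof. by rewrite /Lstar coefD coef_deriv !coefMXn. Qed.

Theorem lemma3p4 (K : fieldType) (a b : {poly K}) (w : nat)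
    (f : 'I_w.+1 -> nat -> K) :
  [pchar K] =i pred0 ->
  a != 0 -> b != 0 ->
  (w%:Z = Num.max ((size a).-1%:Z - 2) ((size b).-1%:Z - 1)) ->
  ((size a).-1%:Z - 1 = (size b).-1%:Z ->
     forall k : nat, lead_coef a * (k + (size a).-1)%:R + lead_coef b != 0) ->
  (forall c : 'I_w.+1 -> K,
     (forall k : nat, \sum_(j < w.+1) c j * f j k = 0) -> forall j, c j = 0) ->
  (forall j, L_in_poly a b (f j)) ->
  forall P : {poly K},
    (forall j, phi (f j) P = 0) <-> (exists Q : {poly K}, P = Lstar a b Q).
Proof.
move=> hchar ha hb hw hlead hind hL P.
have hsa : size a = (size a).-1.+1 by rewrite prednK // size_poly_gt0.
have hsb : size b = (size b).-1.+1 by rewrite prednK // size_poly_gt0.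
move: hw hlead hsa hsb; set u := (size a).-1; set v := (size b).-1 => hw hlead hsa hsb.
have [hu hv huv] : [/\ (u <= w.+2)%N, (v <= w.+1)%N & (u == w.+2) || (v == w.+1)].
  have [l|l] := leP (u%:Z - 2) (v%:Z - 1).
    by rewrite (max_idPr l) in hw; split; lia.
  by rewrite (max_idPl (ltW l)) in hw; split; lia.
have hsz : forall e, (size (Lstar a b 'X^e) <= e + w.+1 + 1)%N.
  move=> e; apply/leq_sizeP => j hj; rewrite coef_LstarXn.
  case: ifP => _; case: ifP => _; rewrite ?mul0rn ?add0r ?addr0 //.
  - by rewrite nth_default // hsb; lia.
  - by rewrite nth_default ?mul0rn // hsa; lia.
  - by rewrite !nth_default ?mul0rn ?addr0 // ?hsa ?hsb; lia.
have hc : forall e, (Lstar a b 'X^e)`_(e + w.+1) != 0.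
  move=> e; rewrite coef_LstarXn.
  have -> : ((e + w.+1).+1 < e)%N = false by lia.
  have -> : ((e + w.+1) < e)%N = false by lia.
  have -> : ((e + w.+1).+1 - e = w.+2)%N by lia.
  have -> : ((e + w.+1) - e = w.+1)%N by lia.
  have la : a`_u = lead_coef a by rewrite lead_coefE.
  have lb : b`_v = lead_coef b by rewrite lead_coefE.
  case: (ltngtP u w.+2) => hu2; first last.
  - rewrite -hu2 la -mulr_natr.
    case: (ltngtP v w.+1) => hv1; first last.
    + rewrite -hv1 lb.
      have -> : ((e + v).+1 = e + u)%N by lia.
      apply: hlead; lia.
    + lia.
    + rewrite (nth_default _ (_ : size b <= w.+1)%N); last by rewrite hsb.
      rewrite addr0 mulf_neq0 ?lead_coef_eq0 //.
      apply/negP => /natf0_pchar [//|p]; by rewrite hchar.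
  - lia.
  - rewrite (nth_default _ (_ : size a <= w.+2)%N); last by rewrite hsa.
    have hv1 : v = w.+1 by move: huv; lia.
    by rewrite mul0rn add0r -hv1 lb lead_coef_eq0.
have red := @reduce _ a b w.+1 hsz hc.
have hphiL : forall j Q, phi (f j) (Lstar a b Q) = 0.
  move=> j Q; rewrite phi_Lstar big1 // => l _.
  by rewrite hL ?mulr0 //; lia.
split; last by move=> [Q ->] j; exact: hphiL.
move=> hP.
have [Q [R [eP hR]]] := red _ P (leqnn _).
exists Q; suff hR0 : R = 0 by rewrite eP hR0 addr0.
have hR0 : forall j, phi (f j) R = 0.
  by move=> j; have := hP j; rewrite eP phiD hphiL add0r.
pose M := \matrix_(j < w.+1, k < w.+1) f j k.
have hfree : row_free M.
  rewrite -kermx_eq0; apply/eqP/row_matrixP => i; rewrite row0.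
  set c := row i (kermx M).
  have hcM : c *m M = 0 by rewrite -row_mul mulmx_ker row0.
  apply/rowP => j; rewrite [RHS]mxE; apply: (hind (fun j => c 0 j)) => k.
  have [Q' [R' [eX hR']]] := red _ ('X^k) (leqnn _).
  transitivity (\sum_(j < w.+1) c 0 j * phi (f j) 'X^k).
    by apply: eq_bigr => j' _; rewrite phiXn.
  rewrite eX.
  under eq_bigr => j' _ do rewrite phiD hphiL add0r (phi_sum _ hR') mulr_sumr.
  rewrite exchange_big /= big1 // => k' _.
  move/matrixP: hcM => /(_ 0 k'); rewrite !mxE => hck.
  have -> : \sum_(i0 < w.+1) c 0 i0 * (R'`_k' * f i0 k') =
            R'`_k' * \sum_(j0 < w.+1) c 0 j0 * M j0 k'.
    by rewrite mulr_sumr; apply: eq_bigr => j' _; rewrite /M mxE mulrCA.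
  by rewrite hck mulr0.
have hfreeT : row_free M^T by rewrite row_free_unit unitmx_tr -row_free_unit.
pose x := \row_(k < w.+1) R`_k.
have : x *m M^T = 0.
  apply/rowP => j; rewrite !mxE; transitivity (phi (f j) R); last exact: hR0 j.
  by rewrite (phi_sum _ hR); apply: eq_bigr => k _; rewrite /x /M !mxE.
move/eqP; rewrite mulmx_free_eq0 // => /eqP hx.
apply/polyP => k; rewrite coef0.
case: (ltnP k w.+1) => hk.
  by have := congr1 (fun y : 'rV_w.+1 => y 0 (Ordinal hk)) hx; rewrite !mxE.
exact: nth_default (leq_trans hR hk).
Qed.
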